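(* Let $Y\subseteq R^n$ be a definable set. Then for any linear decomposition $\mathcal D$ of $Y$ there is a special linear decomposition $\mathcal C$ of $Y$ that refines $\mathcal D$, i.e. every cell of $\mathcal D$ is a union of cells of $\mathcal C$.
   Context: Throughout, $\mathcal R=\langle R,<,+,0,\{x\mapsto\lambda x\}_{\lambda\in\Lambda}\rangle$ is an ordered vector space over an ordered division ring $\Lambda$; ''definable'' means definable in $\mathcal R$ with parameters. $R^n$ carries the product of the order topology, $cl$ denotes closure, $\pi:R^n\to R^{n-1}$ is the projection onto the first $n-1$ coordinates, $R^0=\{0\}$. Linear maps: a linear (affine) map $R^m\to R$ is $x\mapsto\lambda_1x_1+\dots+\lambda_mx_m+a$ with $\lambda_i\in\Lambda$, $a\in R$. For $X\subseteq R^{m}$ and $f,g$ each either a linear map or one of the constant functions $\pm\infty$, with $f<g$ on $X$, put $(f,g)_X=\{(x,y)\in X\times R: f(x)<y<g(x)\}$ and let $\Gamma(f)_X$ be the graph of $f$ restricted to $X$; values at points outside $X$ are those of the linear map. Linear cells: $C\subseteq R$ is a linear cell if it is a singleton or an open interval with endpoints in $R\cup\{\pm\infty\}$; for $n>1$, $C\subseteq R^n$ is a linear cell if $C=\Gamma(f)_X$ with $f$ linear, or $C=(f,g)_X$ with $f,g$ linear or $\pm\infty$, $f<g$ on $X$, where $X\subseteq R^{n-1}$ is a linear cell. Linear decompositions: a linear decomposition of $R$ is a finite partition of $R$ into linear cells; for $n>1$ a linear decomposition of $R^n$ is a finite partition $\mathcal C$ of $R^n$ into linear cells such that $\pi(\mathcal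 C)=\{\pi(D):D\in\mathcal C\}$ is a linear decomposition of $R^{n-1}$. For definable $Y\subseteq R^n$, a linear decomposition of $Y$ is $\{D\cap Y: D\in\mathcal C\}\setminus\{\emptyset\}$ for a linear decomposition $\mathcal C$ of $R^n$ each of whose members is contained in or disjoint from $Y$. Special linear decompositions are defined recursively: every linear decomposition of a subset of $R$ is special; for $n>1$ a linear decomposition $\mathcal C$ of $Y\subseteq R^n$ is special if (1) $\pi(\mathcal C)$ is a special linear decomposition of $\pi(Y)$; (2) for every two cells $\Gamma(f)_S,\Gamma(g)_T\in\mathcal C$ and every $V\in\pi(\mathcal C)$, one has $f<g$ on $V$, or $f=g$ on $V$, or $f>g$ on $V$; (3) for every two cells $\Gamma(h)_S,(f,g)_T\in\mathcal C$ there is no $c\in cl(S)\cap cl(T)$ with $f(c)<h(c)<g(c)$. *)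

(* Defs.v *)
From Stdlib Require Import List.
From HB Require Import structures.
From mathcomp Require Import all_boot all_order all_algebra.
Set Implicit Arguments. Unset Strict Implicit. Unset Printing Implicit Defensive.
Import GRing.Theory.
Local Open Scope ring_scope.

Inductive xR (T : Type) := NInf | Fin of T | PInf.
Arguments NInf {T}. Arguments PInf {T}. Arguments Fin {T} _.

Section Setting.
Variable L : unitRingType.
Variable ltL : L -> L -> Prop.
Variable R : lmodType L.
Variable ltR : R -> R -> Prop.

Definition strict_total_order (T : Type) (lt : T -> T -> Prop) : Prop :=
  (forall x, ~ lt x x) /\ (forall x y z, lt x y -> lt y z -> lt x z) /\
  (forall x y, lt x y \/ x = y \/ lt y x).

Definition ordered_division_ring : Prop :=
  strict_total_order ltL /\
  (forall a b c : L, ltL a b -> ltL (a + c) (b + c)) /\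
  (forall a b : L, ltL 0 a -> ltL 0 b -> ltL 0 (a * b)) /\
  (forall a : L, a != 0 -> a \is a GRing.unit).

Definition ordered_vector_space : Prop :=
  strict_total_order ltR /\
  (forall x y z : R, ltR x y -> ltR (x + z) (y + z)) /\
  (forall (a : L) (x : R), ltL 0 a -> ltR 0 x -> ltR 0 (a *: x)).

Definition xlt (a b : xR R) : Prop :=
  match a, b with
  | NInf, NInf => False
  | NInf, _ => True
  | Fin x, Fin y => ltR x y
  | Fin _, PInf => True
  | _, _ => False
  end.

(* R^n as iterated product: R^0 = unit, R^(n+1) = R^n * R;
   the projection π : R^(n+1) -> R^n is fst. *)
Fixpoint Rn (n : nat) : Type := match n with 0 => unit | m.+1 => (Rn m * R)%type end.

(* i-th coordinate (0-based) of a point of R^n; 0 outside range *)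
Fixpoint coord (n : nat) : Rn n -> nat -> R :=
  match n as m return Rn m -> nat -> R with
  | 0 => fun _ _ => 0
  | m.+1 => fun x i => if i == m then x.2 else coord x.1 i
  end.

Inductive term :=
  | TVar of nat | TConst of R | TZero | TAdd of term & term | TScale of L & term.
Inductive formula :=
  | FLt of term & term | FEq of term & term | FNot of formula
  | FAnd of formula & formula | FOr of formula & formula | FEx of nat & formula.

Fixpoint teval (e : nat -> R) (t : term) : R :=
  match t with
  | TVar i => e i | TConst r => r | TZero => 0
  | TAdd t1 t2 => teval e t1 + teval e t2
  | TScale a t1 => a *: teval e t1
  end.

Definition upd (e : nat -> R) (i : nat) (r : R) : nat -> R :=
  fun j => if j == i then r else e j.

Fixpoint holds (e : nat -> R) (f : formula) : Prop :=
  match f with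
  | FLt t1 t2 => ltR (teval e t1) (teval e t2)
  | FEq t1 t2 => teval e t1 = teval e t2
  | FNot g => ~ holds e g
  | FAnd g h => holds e g /\ holds e h
  | FOr g h => holds e g \/ holds e h
  | FEx i g => exists r, holds (upd e i r) g
  end.

Definition definable (n : nat) (Y : Rn n -> Prop) : Prop :=
  exists phi : formula, forall x, Y x <-> holds (coord x) phi.

Fixpoint lcoef (n : nat) : Type := match n with 0 => unit | m.+1 => (lcoef m * L)%type end.
Fixpoint dot (n : nat) : lcoef n -> Rn n -> R :=
  match n as m return lcoef m -> Rn m -> R with
  | 0 => fun _ _ => 0
  | m.+1 => fun c x => dot c.1 x.1 + c.2 *: x.2
  end.
Definition linmap (n : nat) : Type := (lcoef n * R)%type.
Definition leval (n : nat) (f : linmap n) (x : Rn n) : R := dot f.1 x + f.2.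
Definition xeval (n : nat) (b : xR (linmap n)) (x : Rn n) : xR R :=
  match b with NInf => NInf | Fin f => Fin (leval f x) | PInf => PInf end.

Inductive ckind (n : nat) :=
  | KGraph of linmap n
  | KBand of xR (linmap n) & xR (linmap n).

(* a cell of R^(n+1) is given by its base cell X ⊆ R^n and its kind *)
Fixpoint cdesc (n : nat) : Type :=
  match n with 0 => unit | m.+1 => (cdesc m * ckind m)%type end.

Fixpoint cset (n : nat) : cdesc n -> Rn n -> Prop :=
  match n as m return cdesc m -> Rn m -> Prop with
  | 0 => fun _ _ => True
  | m.+1 => fun d x =>
      cset d.1 x.1 /\
      match d.2 with
      | KGraph f => x.2 = leval f x.1
      | KBand f g => xlt (xeval f x.1) (Fin x.2) /\ xlt (Fin x.2) (xeval g x.1)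
      end
  end.

Fixpoint cwf (n : nat) : cdesc n -> Prop :=
  match n as m return cdesc m -> Prop with
  | 0 => fun _ => True
  | m.+1 => fun d =>
      cwf d.1 /\
      match d.2 with
      | KGraph _ => True
      | KBand f g => forall x, cset d.1 x -> xlt (xeval f x) (xeval g x)
      end
  end.

Definition set_eq (n : nat) (A B : Rn n -> Prop) := forall x, A x <-> B x.

Definition partition_of (n : nat) (cs : list (cdesc n)) (Y : Rn n -> Prop) : Prop :=
  (forall x, Y x <-> exists d, In d cs /\ cset d x) /\
  (forall d1 d2, In d1 cs -> In d2 cs ->
     (exists x, cset d1 x /\ cset d2 x) -> set_eq (cset d1) (cset d2)) /\
  (forall d, In d cs -> exists x, cset d x).

Definition proj (n : nat) (cs : list (cdesc n.+1)) : list (cdesc n) := map fst cs.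

Fixpoint is_ldec (n : nat) : list (cdesc n) -> Prop :=
  match n as m return list (cdesc m) -> Prop with
  | 0 => fun cs => partition_of cs (fun _ => True)
  | m.+1 => fun cs =>
      (forall d, In d cs -> cwf d) /\ partition_of cs (fun _ => True) /\
      is_ldec (proj cs)
  end.

Definition is_ldec_of (n : nat) (Y : Rn n -> Prop) (cs : list (cdesc n)) : Prop :=
  exists full : list (cdesc n),
    is_ldec full /\
    (forall d, In d full ->
       (forall x, cset d x -> Y x) \/ (forall x, cset d x -> ~ Y x)) /\
    (forall d, In d cs <-> (In d full /\ forall x, cset d x -> Y x)).

Fixpoint xbox (n : nat) : Type :=
  match n with 0 => unit | m.+1 => (xbox m * (xR R * xR R))%type end.
Fixpoint in_box (n : nat) : xbox n -> Rn n -> Prop :=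
  match n as m return xbox m -> Rn m -> Prop with
  | 0 => fun _ _ => True
  | m.+1 => fun b x => in_box b.1 x.1 /\ xlt b.2.1 (Fin x.2) /\ xlt (Fin x.2) b.2.2
  end.
Definition closure (n : nat) (S : Rn n -> Prop) (c : Rn n) : Prop :=
  forall b : xbox n, in_box b c -> exists s, S s /\ in_box b s.

Definition proj_set (n : nat) (Y : Rn n.+1 -> Prop) : Rn n -> Prop :=
  fun x => exists y, Y (x, y).

Fixpoint is_special (n : nat) : (Rn n -> Prop) -> list (cdesc n) -> Prop :=
  match n as m return (Rn m -> Prop) -> list (cdesc m) -> Prop with
  | 0 => fun Y cs => is_ldec_of Y cs
  | m.+1 => fun Y cs =>
      is_ldec_of Y cs /\
      is_special (proj_set Y) (proj cs) /\
      (forall S f T g, In (S, KGraph f) cs -> In (T, KGraph g) cs ->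
                  forall V, In V (proj cs) ->
                    (forall x, cset V x -> ltR (leval f x) (leval g x)) \/
                    (forall x, cset V x -> leval f x = leval g x) \/
                    (forall x, cset V x -> ltR (leval g x) (leval f x))) /\
      (forall S h T f g, In (S, KGraph h) cs -> In (T, KBand f g) cs ->
                  ~ exists c, closure (cset S) c /\ closure (cset T) c /\
                      xlt (xeval f c) (Fin (leval h c)) /\
                      xlt (Fin (leval h c)) (xeval g c))
  end.

Definition refines (n : nat) (C D : list (cdesc n)) : Prop :=
  forall d, In d D -> forall x,
    cset d x <-> exists c, In c C /\ cset c x /\ (forall z, cset c z -> cset d z).

End Setting.

(* Main.v *)
Require Import Defs.
From Stdlib Require Import List.
From HB Require Import structures.
From mathcomp Require Import all_boot all_order all_algebra.
From Stdlib Require Import Classical ClassicalEpsilon.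
Set Implicit Arguments. Unset Strict Implicit. Unset Printing Implicit Defensive.
Import GRing.Theory.
Local Open Scope ring_scope.

Section Main.
Variable L : unitRingType.
Variable ltL : L -> L -> Prop.
Variable R : lmodType L.
Variable ltR : R -> R -> Prop.
Hypothesis HL : ordered_division_ring ltL.
Hypothesis HR : ordered_vector_space ltL ltR.

Lemma Lirr (a : L) : ~ ltL a a. Proof. case: HL => [[H _] _]; exact: H. Qed.
Lemma Ltr (a : L) b c : ltL a b -> ltL b c -> ltL a c. Proof. case: HL => [[_ [H _]] _]; exact: H. Qed.
Lemma Ltot (a : L) b : ltL a b \/ a = b \/ ltL b a. Proof. by case: HL => [[_ [_ ?]] _]. Qed.
Lemma Ladd (a : L) b c : ltL a b -> ltL (a + c) (b + c). Proof. case: HL => [_ [H _]]; exact: H. Qed.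
Lemma Lmul (a : L) b : ltL 0 a -> ltL 0 b -> ltL 0 (a * b). Proof. case: HL => [_ [_ [H _]]]; exact: H. Qed.
Lemma Lunit (a : L) : a != 0 -> a \is a GRing.unit. Proof. case: HL => [_ [_ [_ H]]]; exact: H. Qed.

Lemma Rirr (a : R) : ~ ltR a a. Proof. case: HR => [[H _] _]; exact: H. Qed.
Lemma Rtr (a : R) b c : ltR a b -> ltR b c -> ltR a c. Proof. case: HR => [[_ [H _]] _]; exact: H. Qed.
Lemma Rtot (a : R) b : ltR a b \/ a = b \/ ltR b a. Proof. by case: HR => [[_ [_ ?]] _]. Qed.
Lemma Radd (a : R) b c : ltR a b -> ltR (a + c) (b + c). Proof. case: HR => [_ [H _]]; exact: H. Qed.
Lemma Rscale (a : L) x : ltL 0 a -> ltR 0 x -> ltR 0 (a *: x). Proof. case: HR => [_ [_ H]]; exact: H. Qed.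

Lemma Rasym (a : R) b : ltR a b -> ltR b a -> False.
Proof. move=> h1 h2; exact: (Rirr (Rtr h1 h2)). Qed.
Lemma Laddl (a b c : L) : ltL a b -> ltL (c + a) (c + b).
Proof. by rewrite ![c + _]addrC; apply: Ladd. Qed.
Lemma Raddl (a : R) b c : ltR a b -> ltR (c + a) (c + b).
Proof. by rewrite ![c + _]addrC; apply: Radd. Qed.
Lemma Rsub (a : R) b : ltR a b <-> ltR 0 (b - a).
Proof.
split=> h; first by have := Radd (- a) h; rewrite subrr.
by have := Radd a h; rewrite add0r subrK.
Qed.
Lemma Rsubn (a : R) b : ltR a b <-> ltR (a - b) 0.
Proof.
split=> h; first by have := Radd (- b) h; rewrite subrr.
by have := Radd b h; rewrite add0r subrK.
Qed.
Lemma Rneg (a : R) : ltR 0 a <-> ltR (- a) 0.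
Proof. split=> h; first by move/Rsubn: h; rewrite sub0r.
by apply/Rsubn; rewrite sub0r. Qed.
Lemma Rneg' (a : R) : ltR a 0 <-> ltR 0 (- a).
Proof. split=> h; first by move/Rsub: h; rewrite sub0r.
by apply/Rsub; rewrite sub0r. Qed.
Lemma Rpos_add (a : R) b : ltR 0 a -> ltR 0 b -> ltR 0 (a + b).
Proof. move=> ha hb; apply: Rtr ha _; have := Raddl a hb; by rewrite addr0. Qed.
Lemma Rscale_mono (a : L) x y : ltL 0 a -> ltR x y -> ltR (a *: x) (a *: y).
Proof. move=> ha /Rsub h; apply/Rsub; rewrite -scalerBr; exact: Rscale. Qed.
Lemma Lneg (a : L) : ltL a 0 -> ltL 0 (- a).
Proof. move=> h; have := Ladd (- a) h; by rewrite subrr add0r. Qed.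
Lemma Rscale_neg (a : L) x y : ltL a 0 -> ltR x y -> ltR (a *: y) (a *: x).
Proof.
move=> ha h; have := Rscale_mono (Lneg ha) h; rewrite !scaleNr => h'.
have := Radd (a *: x + a *: y) h'.
have e1 : - (a *: x) + (a *: x + a *: y) = a *: y by rewrite addrA addNr add0r.
have e2 : - (a *: y) + (a *: x + a *: y) = a *: x by rewrite addrC -addrA subrr addr0.
by rewrite e1 e2.
Qed.

Lemma L01 : ltL 0 1.
Proof.
case: (Ltot 0 1) => [//|[h|h]].
  by move: (@oner_neq0 L); rewrite -h eqxx.
have := Lmul (Lneg h) (Lneg h); rewrite mulrNN mulr1 => h'.
by case: (Lirr (Ltr h h')).
Qed.
Lemma Lne0 (a : L) : ltL 0 a -> a != 0.
Proof. by move=> h; apply/eqP => e; rewrite e in h; apply: (Lirr h). Qed.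
Lemma Linv_pos (a : L) : ltL 0 a -> ltL 0 a^-1.
Proof.
move=> h; have ua := Lunit (Lne0 h).
case: (Ltot 0 a^-1) => [//|[e|e]].
  by move: (Lne0 h); rewrite -(invrK a) -e invr0 eqxx.
have := Lmul h (Lneg e); rewrite mulrN mulrV // => h'.
have := Ladd 1 h'; rewrite addNr add0r => h''.
by case: (Lirr (Ltr L01 h'')).
Qed.
Definition half : L := (1 + 1)^-1.
Lemma L2 : ltL 0 (1 + 1).
Proof. apply: Ltr L01 _; have := Ladd 1 L01; by rewrite add0r. Qed.
Lemma half_pos : ltL 0 half. Proof. exact: Linv_pos L2. Qed.
Lemma half_half (x : R) : half *: x + half *: x = x.
Proof.
have e : half + half = 1.
  by rewrite -{1 2}(mulr1 half) -mulrDr mulVr // (Lunit (Lne0 L2)).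
by rewrite -scalerDl e scale1r.
Qed.
Lemma Rhalf_pos x : ltR 0 x -> ltR 0 (half *: x).
Proof. by move=> h; apply: Rscale half_pos h. Qed.

Lemma Rmid (a : R) b : ltR a b -> ltR a (half *: (a + b)) /\ ltR (half *: (a + b)) b.
Proof.
move=> h; rewrite scalerDr; split.
  have := Raddl (half *: a) (Rscale_mono half_pos h); by rewrite half_half.
have := Radd (half *: b) (Rscale_mono half_pos h); by rewrite half_half.
Qed.


Local Notation lin n := (linmap (L:=L) R n).
Local Notation pt n := (Rn (L:=L) R n).
Local Notation cd n := (cdesc (L:=L) R n).

Lemma ab4 (u v w z : R) : u + v = w + (v + (-z + (u + (-w + z)))).
Proof. by rewrite (addrC (-w) z) [-z + _]addrCA addKr [w + _]addrCA [w + _]addrCA subrr addr0 addrC. Qed.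
Lemma Lne0' (a : L) : ltL a 0 -> a != 0.
Proof. by move=> h; apply/eqP => e; rewrite e in h; apply: (Lirr h). Qed.

Fixpoint lcsub n : lcoef L n -> lcoef L n -> lcoef L n :=
  match n with 0 => fun _ _ => tt | m.+1 => fun c d => (lcsub c.1 d.1, c.2 - d.2) end.
Fixpoint lcscale n (mu : L) : lcoef L n -> lcoef L n :=
  match n with 0 => fun _ => tt | m.+1 => fun c => (lcscale mu c.1, mu * c.2) end.

Lemma dot_sub n (c d : lcoef L n) (x : pt n) : dot (lcsub c d) x = dot c x - dot d x.
Proof.
elim: n c d x => [|n IH] c d x /=; first by rewrite subrr.
by rewrite IH scalerBl opprD addrACA.
Qed.
Lemma dot_scale n mu (c : lcoef L n) (x : pt n) : dot (lcscale mu c) x = mu *: dot c x.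
Proof.
elim: n c x => [|n IH] c x /=; first by rewrite scaler0.
by rewrite IH scalerDr scalerA.
Qed.

Definition lsub n (a b : lin n) : lin n := (lcsub a.1 b.1, a.2 - b.2).
Lemma leval_sub n (a b : lin n) x : leval (lsub a b) x = leval a x - leval b x.
Proof. by rewrite /leval /= dot_sub opprD addrACA. Qed.

Lemma cont n (l : lin n) c : ltR 0 (leval l c) ->
  exists b : xbox R n, in_box ltR b c /\ forall x, in_box ltR b x -> ltR 0 (leval l x).
Proof.
elim: n l c => [|n IH] l c.
  by move=> h; exists tt; split=> // x _; case: x; case: c h.
case: l => [[l' lam] a]; case: c => [c' cy] /= he.
set e := leval _ _ in he.
set e2 := half *: e.
have he2 : ltR 0 e2 by apply: Rhalf_pos.
have ee : e = e2 + e2 by rewrite half_half.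
pose l'' : lin n := (l', lam *: cy + a - e2).
have h'' : ltR 0 (leval l'' c').
  have -> : leval l'' c' = e - e2 by rewrite /leval /e /= !addrA.
  by rewrite {1}ee addrK.
have [b' [hb'c hb']] := IH _ _ h''.
have split_eq : forall x' y, leval (((l', lam), a) : lin n.+1) (x', y) =
    leval l'' x' + (lam *: (y - cy) + e2).
  move=> x' y; rewrite /leval /= scalerBr.
  rewrite -!addrA; congr (_ + _); exact: ab4.
suff [bl [hbc hb]] : exists bl : xR R * xR R, (xlt ltR bl.1 (Fin cy) /\ xlt ltR (Fin cy) bl.2) /\
   forall y, xlt ltR bl.1 (Fin y) -> xlt ltR (Fin y) bl.2 -> ltR 0 (lam *: (y - cy) + e2).
  exists (b', bl); split; first by [].
  case=> x' y /= [hx' [hy1 hy2]]; rewrite split_eq.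
  by apply: Rpos_add; [apply: hb' | apply: hb].
case: (Ltot 0 lam) => [hl|[hl|hl]].
- pose d := lam^-1 *: e2.
  have hd : ltR 0 d by apply: Rscale (Linv_pos hl) he2.
  exists (Fin (cy - d), PInf); split.
    split=> //=; apply/Rsub; by rewrite opprB addrC subrK.
  move=> y /= hy _.
  have h1 : ltR (- d) (y - cy).
    have := Radd (- cy) hy; by rewrite addrAC subrr add0r.
  have := Rscale_mono hl h1; rewrite scalerN /d scalerA mulrV ?scale1r; last exact: Lunit (Lne0 hl).
  move=> h2; have := Radd e2 h2; by rewrite addNr.
- by subst lam; exists (NInf, PInf); split=> // y _ _; rewrite scale0r add0r.
- have hl' := Lneg hl.
  pose d := (- lam)^-1 *: e2.
  have hd : ltR 0 d by apply: Rscale (Linv_pos hl') he2.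
  exists (NInf, Fin (cy + d)); split.
    split=> //=; apply/Rsub; by rewrite addrC addKr.
  move=> y _ /= hy.
  have h1 : ltR (y - cy) d.
    have := Radd (- cy) hy; by rewrite addrAC subrr add0r.
  have := Rscale_neg hl h1; rewrite /d scalerA invrN mulrN mulrV ?scaleN1r; last exact: Lunit (Lne0' hl).
  move=> h2; have := Radd e2 h2; by rewrite addNr.
Qed.


Lemma clos_le n (a b : lin n) (S : pt n -> Prop) c :
  (forall x, S x -> ~ ltR (leval a x) (leval b x)) -> Defs.closure ltR S c ->
  ~ ltR (leval a c) (leval b c).
Proof.
move=> h hc hab.
have h0 : ltR 0 (leval (lsub b a) c) by rewrite leval_sub; move/Rsub: hab.
have [bx [hbc hbx]] := cont h0.
have [s [hs hsb]] := hc bx hbc.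
by apply: (h s hs); apply/Rsub; rewrite -leval_sub; apply: hbx.
Qed.

Fixpoint firstO (A : Type) (P : A -> Prop) (l : list A) : option A :=
  match l with
  | nil => None
  | a :: l' => if excluded_middle_informative (P a) then Some a else firstO P l'
  end.
Lemma firstO_some A (P : A -> Prop) l a : firstO P l = Some a -> In a l /\ P a.
Proof.
elim: l => //= b l IH; case: excluded_middle_informative => [hb [<-]|hb /IH [? ?]].
  by split; [left|].
by split; [right|].
Qed.
Lemma firstO_none A (P : A -> Prop) l : firstO P l = None -> forall a, In a l -> ~ P a.
Proof.
elim: l => //= b l IH; case: excluded_middle_informative => // hb /IH h a [<-|]; auto.
Qed.
Lemma firstO_ext A (P Q : A -> Prop) l : (forall a, P a <-> Q a) -> firstO P l = firstO Q l.
Proof.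
move=> e; elim: l => //= b l IH.
case: excluded_middle_informative => hP; case: excluded_middle_informative => hQ //.
- by case: hQ; apply/e.
- by case: hP; apply/e.
Qed.

Definition cfilt A (P : A -> Prop) (l : list A) : list A :=
  List.filter (fun a => if excluded_middle_informative (P a) then true else false) l.
Lemma In_cfilt A (P : A -> Prop) l a : In a (cfilt P l) <-> In a l /\ P a.
Proof.
rewrite /cfilt List.filter_In; case: excluded_middle_informative => h; split; by case.
Qed.
Lemma In_map A B (f : A -> B) l b : In b (map f l) <-> exists a, f a = b /\ In a l.
Proof.
elim: l => /= [|a l IH]; first by split=> // [[? [_ []]]].
split.
  case=> [<-|/(proj1 IH) [a' [e h]]]; first by exists a; auto.
  by exists a'; auto.
case=> a' [e [ha|h]]; first by left; rewrite ha.
by right; apply: (proj2 IH); exists a'.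
Qed.

Lemma ext_ex A (lt : R -> R -> Prop) (ev : A -> R) :
  (forall x, ~ lt x x) -> (forall x y z, lt x y -> lt y z -> lt x z) ->
  (forall x y, lt x y \/ x = y \/ lt y x) ->
  forall (P : A -> Prop) l, (exists a, In a l /\ P a) ->
  exists m, In m l /\ P m /\ forall a, In a l -> P a -> ~ lt (ev m) (ev a).
Proof.
move=> irr tr tot P; elim=> [|b l IH] /=; first by case=> ? [].
case: (classic (exists a, In a l /\ P a)) => [/IH [m [hm [hPm hmax]]]|hno].
  case=> _ _.
  case: (classic (P b /\ lt (ev m) (ev b))) => [[hPb hlt]|hn].
    exists b; split; [by left|split=> // a [<-|ha] hPa]; first exact: irr.
    by move=> h; apply: (hmax a ha hPa); apply: tr hlt h.
  exists m; split; [by right|split=> // a [<-|ha] hPa]; last exact: hmax.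
  by move=> h; apply: hn.
case=> a [[<-|ha] hPa]; last by case: hno; exists a.
exists b; split; [by left|split=> // a' [<-|ha'] hPa']; first exact: irr.
by case: hno; exists a'.
Qed.

Lemma max_ex A (ev : A -> R) P l : (exists a, In a l /\ P a) ->
  exists m, In m l /\ P m /\ forall a, In a l -> P a -> ~ ltR (ev m) (ev a).
Proof. by apply: ext_ex; [exact: Rirr|exact: Rtr|exact: Rtot]. Qed.
Lemma min_ex A (ev : A -> R) P l : (exists a, In a l /\ P a) ->
  exists m, In m l /\ P m /\ forall a, In a l -> P a -> ~ ltR (ev a) (ev m).
Proof.
apply: (ext_ex (lt := fun x y => ltR y x)).
- exact: Rirr.
- by move=> x y z h1 h2; apply: Rtr h2 h1.
- by move=> x y; case: (Rtot x y) => [h|[h|h]]; auto.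
Qed.

Lemma filt_ex A (P : A -> Prop) l : exists l', forall a, In a l' <-> In a l /\ P a.
Proof. by exists (cfilt P l) => a; apply: In_cfilt. Qed.

Definition sc n (S : pt n -> Prop) (u : pt n -> R) :=
  (forall x, S x -> ltR (u x) 0) \/ (forall x, S x -> u x = 0) \/ (forall x, S x -> ltR 0 (u x)).

Definition clean n (C : list (cd n)) := forall d1 d2, In d1 C -> In d2 C ->
  (exists x, cset ltR d1 x /\ cset ltR d2 x) -> d1 = d2.
Definition covers n (C : list (cd n)) := forall x, exists d, In d C /\ cset ltR d x.
Definition nonemp n (C : list (cd n)) := forall d, In d C -> exists x, cset ltR d x.
Definition fibers n (C : list (cd n.+1)) :=
  forall e, In e C -> forall x, cset ltR e.1 x -> exists y, cset ltR e (x, y).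
Definition cond2 n (cs : list (cd n.+1)) :=
  forall S f T g, In (S, KGraph f) cs -> In (T, KGraph g) cs ->
                  forall V, In V (proj cs) ->
                    (forall x, cset ltR V x -> ltR (leval f x) (leval g x)) \/
                    (forall x, cset ltR V x -> leval f x = leval g x) \/
                    (forall x, cset ltR V x -> ltR (leval g x) (leval f x)).
Definition cond3 n (cs : list (cd n.+1)) :=
  forall S h T f g, In (S, KGraph h) cs -> In (T, KBand f g) cs ->
                  ~ exists c, Defs.closure ltR (cset ltR S) c /\ Defs.closure ltR (cset ltR T) c /\
                      xlt ltR (xeval f c) (Fin (leval h c)) /\
                      xlt ltR (Fin (leval h c)) (xeval g c).

Fixpoint good n : list (cd n) -> Prop :=
  match n as m return list (cd m) -> Prop with
  | 0 => fun C => clean C /\ covers C /\ nonemp C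
  | m.+1 => fun C => clean C /\ covers C /\ nonemp C /\ (forall d, In d C -> cwf ltR d) /\
      fibers C /\ good (proj C) /\ cond2 C /\ cond3 C
  end.

Lemma In_proj n (C : list (cd n.+1)) d : In d (proj C) <-> exists e, e.1 = d /\ In e C.
Proof. exact: In_map. Qed.

Lemma good_ext n (C1 C2 : list (cd n)) : (forall d, In d C1 <-> In d C2) -> good C1 -> good C2.
Proof.
elim: n C1 C2 => [|n IH] C1 C2 e /=.
  case=> [hc [hv hn]]; split; [|split].
  - by move=> d1 d2 /e h1' /e h2'; apply: hc.
  - by move=> x; have [d [/e ? ?]] := hv x; exists d.
  - by move=> d /e; apply: hn.
case=> [hc [hv [hn [hw [hf [hg [h2 h3]]]]]]].
have ep : forall d, In d (proj C1) <-> In d (proj C2).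
  by move=> d; rewrite !In_proj; split; case=> e' [? /e ?]; exists e'.
split; [|split; [|split; [|split; [|split; [|split; [|split]]]]]].
- by move=> d1 d2 /e h1' /e h2'; apply: hc.
- by move=> x; have [d [/e ? ?]] := hv x; exists d.
- by move=> d /e; apply: hn.
- by move=> d /e; apply: hw.
- by move=> d /e; apply: hf.
- exact: IH hg.
- by move=> S f T g /e h1' /e h2' V /ep hV; exact: (h2 _ _ _ _ h1' h2' _ hV).
- by move=> S h T f g /e h1' /e h2'; exact: (h3 _ _ _ _ _ h1' h2').
Qed.

Lemma good_ldec n (C : list (cd n)) : good C -> is_ldec ltR C.
Proof.
have P : forall C : list (cd n), clean C -> covers C -> nonemp C -> partition_of ltR C (fun=> True).
  move=> C0 hc hv hn; split; first by move=> x; split=> // _; apply: hv.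
  split=> //; by move=> d1 d2 h1 h2 /(hc _ _ h1 h2) ->.
elim: n C P => [|n IH] C P /=.
  by case=> [hc [hv hn]]; apply: P.
case=> [hc [hv [hn [hw [hf [hg _]]]]]].
split=> //; split; last first.
  apply: IH hg; move=> C0 hc0 hv0 hn0; split; first by move=> x; split=> // _; apply: hv0.
  split=> //; by move=> d1 d2 h1 h2 /(hc0 _ _ h1 h2) ->.
split; first by move=> x; split=> // _; apply: hv.
split=> //; by move=> d1 d2 h1 h2 /(hc _ _ h1 h2) ->.
Qed.

Lemma good_basic n (C : list (cd n)) : good C -> clean C /\ covers C /\ nonemp C.
Proof. by case: n C => [|n] C /=; [|case=> [? [? [? _]]]]. Qed.

Lemma ldec_cover n (C : list (cd n)) : is_ldec ltR C -> covers C.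
Proof.
case: n C => [|n] C /=.
  by case=> [h _] x; apply/h.
by case=> [_ [[h _] _]] x; apply/h.
Qed.

Lemma spec n (C : list (cd n)) (Y : pt n -> Prop) (cs : list (cd n)) : good C ->
  (forall d, In d C -> (forall x, cset ltR d x -> Y x) \/ (forall x, cset ltR d x -> ~ Y x)) ->
  (forall d, In d cs <-> In d C /\ (forall x, cset ltR d x -> Y x)) ->
  is_special ltR Y cs.
Proof.
elim: n C Y cs => [|n IH] C Y cs.
  move=> hg hY hcs; exists C; split; first exact: good_ldec.
  by split.
move=> hg hY hcs.
have hg' := hg; case: hg' => [hc [hv [hn [hw [hf [hgp [h2 h3]]]]]]].
have hsub : forall d, In d cs -> In d C by move=> d /hcs [].
have KS : forall e' p, In e' C -> cset ltR e' p -> Y p -> forall q, cset ltR e' q -> Y q.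
  move=> e' p he hp hy; case: (hY _ he) => // hd; by case: (hd _ hp).
have KP : forall x y, Y (x, y) -> exists e', In e' C /\ cset ltR e'.1 x /\
    (forall q, cset ltR e' q -> Y q).
  move=> x y hy; have [e' [he hxe]] := hv (x, y).
  exists e'; split=> //; split; first by case: hxe.
  exact: KS he hxe hy.
split.
  exists C; split; first exact: good_ldec.
  split=> //; exact: hY.
split; last split.
- apply: (IH (proj C)) => //.
  + move=> d hd; case: (classic (exists x, cset ltR d x /\ proj_set Y x)) => [[x [hx [y hy]]]|hno].
      have [e' [he' [hxe' hYe']]] := KP _ _ hy.
      have ed : e'.1 = d.
        case: (good_basic hgp) => hcl _; apply: hcl => //; last by exists x.
        by apply/In_proj; exists e'.
      left=> x' hx'; rewrite -ed in hx'.
      have [y' hy'] := hf _ he' _ hx'; exists y'; exact: hYe'.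
    by right=> x hx hy; apply: hno; exists x.
  + move=> d; split.
      case/In_proj=> e [<- /hcs [heC heY]]; split; first by apply/In_proj; exists e.
      move=> x hx; have [y hy] := hf _ heC _ hx; exists y; exact: heY.
    case=> /In_proj [e [<- heC]] hd.
    have [x hx] : exists x, cset ltR e.1 x.
      case: (good_basic hgp) => _ [_ hnp]; apply: hnp; by apply/In_proj; exists e.
    have [y hy] := hd _ hx.
    have [e' [he' [hxe' hYe']]] := KP _ _ hy.
    have ed : e'.1 = e.1.
      case: (good_basic hgp) => hcl _; apply: hcl; [by apply/In_proj; exists e'|by apply/In_proj; exists e|by exists x].
    apply/In_proj; exists e'; split=> //; exact/hcs.
- move=> S f T g h1 h2' V hV; apply: (h2 S f T g); try exact: hsub.
  by move/In_proj: hV => [e [<- he]]; apply/In_proj; exists e; split=> //; apply: hsub.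
- by move=> S h T f g h1 h2'; apply: (h3 S h T f g); apply: hsub.
Qed.



Lemma good_cwf n (C : list (cd n)) : good C -> forall d, In d C -> cwf ltR d.
Proof. by case: n C => [|n] C /=; [|case=> [_ [_ [_ [? _]]]]]. Qed.

Definition kin n (k : ckind (L:=L) R n) (x : pt n) (y : R) : Prop :=
  match k with
  | KGraph f => y = leval f x
  | KBand f g => xlt ltR (xeval f x) (Fin y) /\ xlt ltR (Fin y) (xeval g x)
  end.

Lemma dens : (exists z : R, z <> 0) -> forall a b : xR R, xlt ltR a b ->
  exists y, xlt ltR a (Fin y) /\ xlt ltR (Fin y) b.
Proof.
case=> z hz.
have [p hp] : exists p, ltR 0 p.
  case: (Rtot z 0) => [h|[h|h]]; last by exists z.
    by exists (- z); apply/Rneg'.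
  by case: hz.
case=> [|a|] [|b|] //= h.
- exists (b - p); split=> //; apply/Rsub; by rewrite opprB addrC subrK.
- by exists (half *: (a + b)); apply: Rmid.
- exists (a + p); split=> //; apply/Rsub; by rewrite addrC addKr.
Qed.

Lemma fib_kind n (k : ckind (L:=L) R n) x :
  (match k with KGraph _ => True | KBand f g => xlt ltR (xeval f x) (xeval g x) end) ->
  (exists x0 y0, kin k x0 y0) -> exists y, kin k x y.
Proof.
case: k => [f|lo hi] /=; first by move=> _ _; exists (leval f x).
move=> hlt [x0 [y0 h0]].
case: (classic (exists z : R, z <> 0)) => [nt|tr].
  exact: dens nt _ _ hlt.
have tz : forall z : R, z = 0.
  by move=> z; apply: NNPP => hz; apply: tr; exists z.
have ex : forall b : xR (lin n), xeval b x = xeval b x0.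
  by case=> //= f; rewrite (tz (leval f x)) (tz (leval f x0)).
by exists y0; rewrite !ex.
Qed.

Section Kinds.
Variable n : nat.
Variable H : list (lin n).

Definition ltV (V : cd n) (a b : lin n) := forall x, cset ltR V x -> ltR (leval a x) (leval b x).
Definition eqV (V : cd n) (a b : lin n) := forall x, cset ltR V x -> leval a x = leval b x.
Definition rep V h := match firstO (eqV V h) H with Some a => a | None => h end.
Definition isnext V h h' := ltV V h h' /\ forall h'', In h'' H -> ltV V h h'' -> ~ ltV V h'' h'.
Definition next V h : xR (lin n) :=
  match firstO (isnext V h) H with Some a => Fin (rep V a) | None => PInf end.
Definition ismin V h' := forall h'', In h'' H -> ~ ltV V h'' h'.
Definition low V : xR (lin n) :=
  match firstO (ismin V) H with Some a => Fin (rep V a) | None => PInf end.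
Definition kinds V : list (ckind (L:=L) R n) :=
  app (map (fun h => KGraph (rep V h)) H)
    (app (map (fun h => KBand (Fin (rep V h)) (next V h)) H) (KBand NInf (low V) :: nil)).

Definition tot V := (exists x, cset ltR V x) /\
  forall a b, In a H -> In b H -> ltV V a b \/ eqV V a b \/ ltV V b a.

Lemma In_kinds V k : In k (kinds V) <->
  (exists h, In h H /\ k = KGraph (rep V h)) \/
  (exists h, In h H /\ k = KBand (Fin (rep V h)) (next V h)) \/ k = KBand NInf (low V).
Proof.
rewrite /kinds !List.in_app_iff !In_map /=.
split.
  case=> [[h [e hh]]|[[h [e hh]]|[e|[]]]].
  - by left; exists h.
  - by right; left; exists h.
  - by right; right.
case=> [[h [e hh]]|[[h [e hh]]|e]].
- by left; exists h.
- by right; left; exists h.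
- by right; right; left.
Qed.

Lemma rep_in V h : In h H -> In (rep V h) H.
Proof. by rewrite /rep; case e: firstO => [a|] // _; case: (firstO_some e). Qed.
Lemma rep_eq V h x : In h H -> cset ltR V x -> leval (rep V h) x = leval h x.
Proof.
rewrite /rep; case e: firstO => [a|] // hh hx.
by case: (firstO_some e) => _ /(_ x hx) ->.
Qed.
Lemma rep_ext V h1 h2 : In h1 H -> eqV V h1 h2 -> rep V h1 = rep V h2.
Proof.
move=> hh e; rewrite /rep.
have -> : firstO (eqV V h1) H = firstO (eqV V h2) H.
  apply: firstO_ext => a; split=> h x hx; first by rewrite -e // h.
  by rewrite e // h.
case f: firstO => [a|] //.
by case: (firstO_none f hh); move=> x hx; rewrite e.
Qed.

Section Tot.
Variable V : cd n.
Hypothesis hV : tot V.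

Lemma pw_lt a b x : In a H -> In b H -> cset ltR V x ->
  ltR (leval a x) (leval b x) -> ltV V a b.
Proof.
move=> ha hb hx h; case: (proj2 hV a b ha hb) => [//|[e|e]].
  by rewrite e // in h; case: (Rirr h).
by case: (Rasym h (e x hx)).
Qed.
Lemma pw_eq a b x : In a H -> In b H -> cset ltR V x ->
  leval a x = leval b x -> eqV V a b.
Proof.
move=> ha hb hx h; case: (proj2 hV a b ha hb) => [e|[//|e]].
  by have := e x hx; rewrite h => /Rirr.
by have := e x hx; rewrite h => /Rirr.
Qed.
Lemma pw_nlt a b x : In a H -> In b H -> cset ltR V x -> ~ ltV V a b ->
  ~ ltR (leval a x) (leval b x).
Proof. by move=> ha hb hx hn h; apply: hn; apply: pw_lt h. Qed.
Lemma ltV_irr a : ~ ltV V a a.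
Proof. by case: hV => [[x hx] _] h; apply: (Rirr (h x hx)). Qed.

Lemma next_exists h0 : In h0 H -> (exists h, In h H /\ ltV V h0 h) ->
  exists m, In m H /\ isnext V h0 m /\ next V h0 = Fin (rep V m).
Proof.
move=> h0H hex; rewrite /next; case e: firstO => [a|].
  by case: (firstO_some e) => ? ?; exists a.
case: hV => [[x0 hx0] _].
have [m [hm [hlt hmin]]] := min_ex (fun h => leval h x0) hex.
case: (firstO_none e hm); split=> // h'' hh'' hlt'' hlt2.
by apply: (hmin h'' hh'' hlt''); apply: hlt2.
Qed.
Lemma next_cases h0 : In h0 H ->
  (next V h0 = PInf /\ forall h, In h H -> ~ ltV V h0 h) \/
  (exists m, In m H /\ isnext V h0 m /\ next V h0 = Fin (rep V m)).
Proof.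
move=> h0H; case: (classic (exists h, In h H /\ ltV V h0 h)) => [hex|hno].
  by right; apply: next_exists.
left; split; last by move=> h hh hl; apply: hno; exists h.
rewrite /next; case e: firstO => [a|] //.
by case: (firstO_some e) => ha [hl _]; case: hno; exists a.
Qed.
Lemma next_ext h1 h2 : eqV V h1 h2 -> next V h1 = next V h2.
Proof.
move=> e; rewrite /next.
have E : forall b, ltV V h1 b <-> ltV V h2 b.
  by move=> b; split=> h x hx; [rewrite -e | rewrite e] => //; apply: h.
rewrite (@firstO_ext _ (isnext V h1) (isnext V h2)) //.
move=> a; rewrite /isnext; split; case=> p q; split.
- exact/E.
- by move=> h'' hh hl; apply: q hh _; apply/E.
- exact/E.
- by move=> h'' hh hl; apply: q hh _; apply/E.
Qed.
Lemma low_exists h : In h H -> exists m, In m H /\ ismin V m /\ low V = Fin (rep V m).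
Proof.
move=> hH; rewrite /low; case e: firstO => [a|].
  by case: (firstO_some e) => ? ?; exists a.
case: hV => [[x0 hx0] _].
have [m [hm [_ hmin]]] := min_ex (fun h => leval h x0) (P := fun _ => True) (ex_intro _ h (conj hH I)).
case: (firstO_none e hm) => h'' hh'' hlt.
by apply: (hmin h'' hh'' I); apply: hlt.
Qed.

Lemma le_of_nlt a b x : In a H -> In b H -> cset ltR V x -> ~ ltV V a b ->
  ltR (leval b x) (leval a x) \/ leval b x = leval a x.
Proof.
move=> ha hb hx hn; case: (proj2 hV a b ha hb) => [//|[e|e]].
  by right; rewrite e.
by left; apply: e.
Qed.

Lemma K_graph h1 x y : In h1 H -> cset ltR V x -> kin (KGraph (rep V h1)) x y -> y = leval h1 x.
Proof. by move=> hh hx /= ->; rewrite rep_eq. Qed.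

Lemma K_band h0 h x y : In h0 H -> In h H -> cset ltR V x ->
  kin (KBand (Fin (rep V h0)) (next V h0)) x y ->
  (ltV V h0 h -> ltR y (leval h x)) /\ (~ ltV V h0 h -> ltR (leval h x) y).
Proof.
move=> h0H hH hx /= [hlo hhi]; rewrite rep_eq // in hlo; split=> hl.
  have [m [hm [[hm1 hm2] en]]] := next_exists h0H (ex_intro _ h (conj hH hl)).
  rewrite en /= rep_eq // in hhi.
  case: (le_of_nlt hH hm hx (hm2 h hH hl)) => [hmh|e]; first exact: Rtr hhi hmh.
  by rewrite -e.
case: (le_of_nlt h0H hH hx hl) => [a|e]; first exact: Rtr a hlo.
by rewrite e.
Qed.

Lemma K_low h x y : In h H -> cset ltR V x -> kin (KBand NInf (low V)) x y -> ltR y (leval h x).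
Proof.
move=> hH hx /= [_ hy].
have [m [hm [hmin e]]] := low_exists hH.
rewrite e /= rep_eq // in hy.
case: (le_of_nlt hH hm hx (hmin h hH)) => [a|e']; first exact: Rtr hy a.
by rewrite -e'.
Qed.

Lemma band_ne h0 h x y : In h0 H -> In h H -> cset ltR V x ->
  kin (KBand (Fin (rep V h0)) (next V h0)) x y -> y <> leval h x.
Proof.
move=> h0H hH hx hk e; have [K1 K2] := K_band h0H hH hx hk.
case: (classic (ltV V h0 h)) => hl.
  by have := K1 hl; rewrite e => /Rirr.
by have := K2 hl; rewrite e => /Rirr.
Qed.

Lemma pos h k : In h H -> In k (kinds V) ->
  (forall x y, cset ltR V x -> kin k x y -> ltR y (leval h x)) \/
  (forall x y, cset ltR V x -> kin k x y -> y = leval h x) \/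
  (forall x y, cset ltR V x -> kin k x y -> ltR (leval h x) y).
Proof.
move=> hH /In_kinds [[h1 [h1H ->]]|[[h0 [h0H ->]]|->]].
- case: (proj2 hV h1 h h1H hH) => [|[|]] hc; [left|right;left|right;right]=> x y hx hk;
    rewrite (K_graph h1H hx hk); by [apply: hc | rewrite hc | apply: hc].
- case: (classic (ltV V h0 h)) => hl; [left|right;right] => x y hx hk;
    have [K1 K2] := K_band h0H hH hx hk; auto.
- by left=> x y hx hk; apply: K_low.
Qed.

Lemma kinds_clean k1 k2 x y : In k1 (kinds V) -> In k2 (kinds V) -> cset ltR V x ->
  kin k1 x y -> kin k2 x y -> k1 = k2.
Proof.
have GB : forall h1 h0, In h1 H -> In h0 H -> cset ltR V x ->
    kin (KGraph (rep V h1)) x y -> kin (KBand (Fin (rep V h0)) (next V h0)) x y -> False.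
  move=> h1 h0 h1H h0H hx k1' k2'.
  exact: (band_ne h0H h1H hx k2' (K_graph h1H hx k1')).
have GL : forall h1, In h1 H -> cset ltR V x ->
    kin (KGraph (rep V h1)) x y -> kin (KBand NInf (low V)) x y -> False.
  move=> h1 h1H hx k1' k2'.
  by have := K_low h1H hx k2'; rewrite -(K_graph h1H hx k1') => /Rirr.
have BL : forall h0, In h0 H -> cset ltR V x ->
    kin (KBand (Fin (rep V h0)) (next V h0)) x y -> kin (KBand NInf (low V)) x y -> False.
  move=> h0 h0H hx k1' k2'.
  have [_ K2] := K_band h0H h0H hx k1'.
  exact: Rasym (K_low h0H hx k2') (K2 (@ltV_irr h0)).
move=> /In_kinds [[h1 [h1H ->]]|[[h1 [h1H ->]]|->]] /In_kinds [[h2 [h2H ->]]|[[h2 [h2H ->]]|->]] hx q1 q2.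
- congr KGraph; apply: rep_ext => //; apply: (pw_eq h1H h2H hx);
    by rewrite -(K_graph h1H hx q1) -(K_graph h2H hx q2).
- by case: (GB _ _ h1H h2H hx q1 q2).
- by case: (GL _ h1H hx q1 q2).
- by case: (GB _ _ h2H h1H hx q2 q1).
- have e : eqV V h1 h2.
    case: (proj2 hV h1 h2 h1H h2H) => [hl|[//|hl]].
    + have [K1 _] := K_band h1H h2H hx q1; have [_ K2] := K_band h2H h2H hx q2.
      by case: (Rasym (K1 hl) (K2 (@ltV_irr h2))).
    + have [K1 _] := K_band h2H h1H hx q2; have [_ K2] := K_band h1H h1H hx q1.
      by case: (Rasym (K1 hl) (K2 (@ltV_irr h1))).
  by rewrite (rep_ext h1H e) (next_ext e).
- by case: (BL _ h1H hx q1 q2).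
- by case: (GL _ h2H hx q2 q1).
- by case: (BL _ h2H hx q2 q1).
- by [].
Qed.

Lemma kinds_cwf k x : In k (kinds V) -> cset ltR V x ->
  match k with KGraph _ => True | KBand f g => xlt ltR (xeval f x) (xeval g x) end.
Proof.
move=> /In_kinds [[h1 [h1H ->]]|[[h0 [h0H ->]]|->]] hx //=.
  case: (next_cases h0H) => [[-> _]|[m [hm [[hm1 _] ->]]]] //=.
  by rewrite !rep_eq //; apply: hm1.
by rewrite /low; case: firstO.

Qed.

Lemma kinds_cover x y : cset ltR V x -> exists k, In k (kinds V) /\ kin k x y.
Proof.
move=> hx.
case: (classic (exists h, In h H /\ y = leval h x)) => [[h [hH e]]|hno].
  exists (KGraph (rep V h)); split; first by apply/In_kinds; left; exists h.
  by rewrite /= rep_eq.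
case: (classic (exists h, In h H /\ ltR (leval h x) y)) => [hex|hno2].
  have [m [hm [hmy hmax]]] := max_ex (fun h => leval h x) hex.
  exists (KBand (Fin (rep V m)) (next V m)); split.
    by apply/In_kinds; right; left; exists m.
  rewrite /= rep_eq //; split=> //.
  case: (next_cases hm) => [[-> _]|[m' [hm' [[hm1 _] ->]]]] //=.
  rewrite rep_eq //.
  case: (Rtot y (leval m' x)) => [//|[e|hlt]].
    by case: hno; exists m'.
  by case: (hmax m' hm' hlt); apply: hm1.
exists (KBand NInf (low V)); split; first by apply/In_kinds; right; right.
split=> //.
rewrite /low; case e: firstO => [a|] //=.
have [ha _] := firstO_some e.
rewrite rep_eq //.
case: (Rtot y (leval a x)) => [//|[e2|hlt]].
  by case: hno; exists a.
by case: hno2; exists a.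
Qed.

Lemma kinds_c3 h k c f g : In h H -> In k (kinds V) -> k = KBand f g ->
  Defs.closure ltR (cset ltR V) c ->
  ~ (xlt ltR (xeval f c) (Fin (leval h c)) /\ xlt ltR (Fin (leval h c)) (xeval g c)).
Proof.
move=> hH hk ek hc; subst k.
move/In_kinds: hk => [[h1 [_ e]]|[[h0 [h0H e]]|e]] //; case: e => -> ->.
  case: (classic (ltV V h0 h)) => hl.
    have [m [hm [[_ hm2] ->]]] := next_exists h0H (ex_intro _ h (conj hH hl)).
    case=> _ /=; apply: (clos_le _ hc) => x hx; rewrite rep_eq //.
    case: (le_of_nlt hH hm hx (hm2 h hH hl)) => [a|e] b.
      exact: Rasym a b.
    by rewrite e in b; apply: (Rirr b).
  case=> /= + _; apply: (clos_le _ hc) => x hx; rewrite rep_eq //.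
  case: (le_of_nlt h0H hH hx hl) => [a|e] b.
    exact: Rasym a b.
  by rewrite e in b; apply: (Rirr b).
have [m [hm [hmin ->]]] := low_exists hH.
case=> _ /=; apply: (clos_le _ hc) => x hx; rewrite rep_eq //.
case: (le_of_nlt hH hm hx (hmin h hH)) => [a|e] b.
  exact: Rasym a b.
by rewrite e in b; apply: (Rirr b).
Qed.

End Tot.
End Kinds.


Definition hF n (f : lin n.+1) : lin n := (lcscale (- (f.1.2)^-1) f.1.1, (- (f.1.2)^-1) *: f.2).
Definition gF n (f : lin n.+1) : lin n := (f.1.1, f.2).
Lemma hF_eq n (f : lin n.+1) x y : f.1.2 != 0 ->
  leval f ((x, y) : pt n.+1) = f.1.2 *: (y - leval (hF f) x).
Proof.
move=> hl; rewrite /leval /= dot_scale -scalerDr scalerBr scalerA mulrN mulrV; last exact: Lunit.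
by rewrite scaleN1r opprK addrCA addrA.
Qed.
Lemma gF_eq n (f : lin n.+1) x y : f.1.2 = 0 -> leval f ((x, y) : pt n.+1) = leval (gF f) x.
Proof. by move=> hl; rewrite /leval /= hl scale0r addr0. Qed.

Definition xl n (b : xR (lin n)) : list (lin n) := match b with Fin f => f :: nil | _ => nil end.
Definition dsm n (k : ckind (L:=L) R n) : list (lin n) :=
  match k with KGraph f => f :: nil | KBand lo hi => app (xl lo) (xl hi) end.

Lemma sc_lift n (S : pt n.+1 -> Prop) (S' : pt n -> Prop) u u' : sc S' u ->
  (forall p, S p -> S' p.1 /\ u' p = u p.1) -> sc S u'.
Proof.
move=> h e; case: h => [h|[h|h]]; [left|right;left|right;right] => p hp;
  case: (e p hp) => h1 ->; exact: h.
Qed.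
Lemma sc_ext n (S : pt n -> Prop) u v : sc S u -> (forall x, S x -> u x = v x) -> sc S v.
Proof.
move=> h e; case: h => [h|[h|h]]; [left|right;left|right;right] => p hp;
  rewrite -e //; exact: h.
Qed.
Lemma sc_scale n (S : pt n -> Prop) u (lam : L) : sc S u -> lam != 0 -> sc S (fun p => lam *: u p).
Proof.
move=> h hl; case: (Ltot 0 lam) => [lp|[e|ln]].
- case: h => [h|[h|h]]; [left|right;left|right;right] => p hp.
  + by rewrite -(scaler0 _ lam); apply: Rscale_mono; last exact: h.
  + by rewrite h // scaler0.
  + exact: Rscale lp (h p hp).
- by rewrite -e eqxx in hl.
- case: h => [h|[h|h]]; [right;right|right;left|left] => p hp.
  + by rewrite -(scaler0 _ lam); apply: Rscale_neg; last exact: h.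
  + by rewrite h // scaler0.
  + by rewrite -(scaler0 _ lam); apply: Rscale_neg; last exact: h.
Qed.

Lemma sc_cmp n (S : pt n -> Prop) (a b : lin n) : sc S (leval (lsub a b)) ->
  (forall x, S x -> ltR (leval a x) (leval b x)) \/
  (forall x, S x -> leval a x = leval b x) \/
  (forall x, S x -> ltR (leval b x) (leval a x)).
Proof.
case=> [h|[h|h]]; [left|right;left|right;right] => x hx; have := h x hx; rewrite leval_sub.
- by move=> hh; apply/Rsubn.
- by move/eqP; rewrite subr_eq0 => /eqP.
- by move=> hh; apply/Rsub.
Qed.

Lemma In_graph_kinds n (H : list (lin n)) V f : In (KGraph f) (kinds H V) -> In f H.
Proof.
move/In_kinds => [[h [hH [->]]]|[[h [_ //]]|//]].
exact: rep_in.
Qed.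

Lemma CD n (F : list (lin n)) (Ds : list (cd n)) : exists C : list (cd n), good C /\
  (forall f, In f F -> forall c, In c C -> sc (cset ltR c) (leval f)) /\
  (forall d, In d Ds -> forall c, In c C ->
     (forall x, cset ltR c x -> cset ltR d x) \/ (forall x, cset ltR c x -> ~ cset ltR d x)).
Proof.
elim: n F Ds => [|n IH] F Ds.
  exists (tt :: nil); split; [|split].
  - split; [|split].
    + by move=> [] [] _ _ _.
    + by move=> x; exists tt; split; [left|].
    + by move=> d _; exists tt.
  - move=> f _ c _; case: (Rtot (leval f tt) 0) => [h|[h|h]];
      [left|right;left|right;right] => x _; by case: x.
  - by move=> d _ c _; left; case: d.
set H := app (map (@hF n) (List.filter (fun f : lin n.+1 => f.1.2 != 0) F))
             (List.flat_map (fun d : cd n.+1 => dsm d.2) Ds).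
set G := map (@gF n) (List.filter (fun f : lin n.+1 => f.1.2 == 0) F).
set Fp := app G (List.flat_map (fun a => map (fun b => lsub a b) H) H).
have [C' [hg' [hsc' hds']]] := IH Fp (map fst Ds).
have [hcl' [hcov' hne']] := good_basic hg'.
have htot : forall V, In V C' -> tot H V.
  move=> V hV; split; first exact: hne'.
  move=> a b ha hb; apply: sc_cmp; apply: hsc' => //.
  apply/List.in_app_iff; right; apply/List.in_flat_map; exists a; split=> //.
  by apply/In_map; exists b.
set C := List.flat_map (fun V => cfilt (fun e : cd n.+1 => exists p, cset ltR e p)
            (map (fun k => ((V, k) : cd n.+1)) (kinds H V))) C'.
have InC : forall e, In e C <-> exists V k, In V C' /\ In k (kinds H V) /\ e = (V, k) /\
     exists p, cset ltR e p.
  move=> e; rewrite List.in_flat_map; split.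
    case=> V [hV /In_cfilt [/In_map [k [<- hk]] hp]].
    by exists V, k.
  case=> V [k [hV [hk [-> hp]]]]; exists V; split=> //; apply/In_cfilt; split=> //.
  by apply/In_map; exists k.
have hcovC : covers C.
  move=> [x y]; have [V [hV hx]] := hcov' x.
  have [k [hk hkin]] := kinds_cover (htot V hV) y hx.
  exists (V, k); split=> //; apply/InC; exists V, k; do 3!split=> //.
  by exists (x, y).
have hprojC : forall d, In d C' <-> In d (proj C).
  move=> d; split.
    move=> hd; have [x hx] := hne' d hd.
    have [e [he hxe]] := hcovC (x, 0).
    have [V [k [hV [hk [ee _]]]]] := proj1 (InC e) he; subst e.
    have eV : V = d by apply: hcl' => //; exists x; split=> //; case: hxe.
    by apply/In_proj; exists (V, k); subst.
  by case/In_proj => e [<- /InC [V [k [hV [_ [-> _]]]]]].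
exists C; split; [|split].
- split; [|split; [|split; [|split; [|split; [|split; [|split]]]]]].
  + move=> e1 e2 /InC [V1 [k1 [hV1 [hk1 [-> _]]]]] /InC [V2 [k2 [hV2 [hk2 [-> _]]]]].
    case=> [[x y] [[hx1 hy1] [hx2 hy2]]].
    have eV : V1 = V2 by apply: hcl' => //; exists x.
    subst V2; congr pair.
    exact: (kinds_clean (htot V1 hV1) hk1 hk2 hx1 hy1 hy2).
  + exact: hcovC.
  + by move=> e /InC [V [k [_ [_ [-> hp]]]]].
  + move=> e /InC [V [k [hV [hk [-> _]]]]]; split; first exact: (good_cwf hg').
    case: k hk => // f g hk x hx.
    exact: (kinds_cwf (htot V hV) hk hx).
  + move=> e /InC [V [k [hV [hk [-> [[x0 y0] [_ h0]]]]]]] x hx.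
    have [y hy] := fib_kind (kinds_cwf (htot V hV) hk hx) (ex_intro _ x0 (ex_intro _ y0 h0)).
    by exists y.
  + exact: good_ext hprojC hg'.
  + move=> S f T g /InC [S' [k1 [hS [hk1 [e1 _]]]]] /InC [T' [k2 [hT [hk2 [e2 _]]]]] V.
    move/hprojC => hV.
    case: e1 => _ ?; subst k1; case: e2 => _ ?; subst k2.
    apply: sc_cmp; apply: hsc' hV.
    apply/List.in_app_iff; right; apply/List.in_flat_map; exists f; split.
      exact: In_graph_kinds hk1.
    by apply/In_map; exists g; split=> //; apply: In_graph_kinds hk2.
  + move=> S h T f g /InC [S' [k1 [hS [hk1 [e1 _]]]]] /InC [T' [k2 [hT [hk2 [e2 _]]]]].
    case: e1 => _ ?; subst k1; case: e2 => ? ?; subst T' k2.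
    case=> c [_ [hcT hc]].
    exact: (kinds_c3 (htot T hT) (In_graph_kinds hk1) hk2 erefl hcT hc).
- move=> f hf e /InC [V [k [hV [hk [-> _]]]]].
  case: (eqVneq f.1.2 0) => hl.
  + have hG : In (gF f) Fp.
      apply/List.in_app_iff; left; apply/In_map; exists f; split=> //.
      by apply/List.filter_In; split=> //; rewrite hl eqxx.
    apply: (sc_lift (hsc' _ hG V hV)) => -[x y] [hx _]; split=> //; exact: gF_eq.
  + have hH : In (hF f) H.
      apply/List.in_app_iff; left; apply/In_map; exists f; split=> //.
      by apply/List.filter_In; split.
    have P := pos (htot V hV) hH hk.
    have S1 : sc (cset ltR ((V, k) : cd n.+1)) (fun p => p.2 - leval (hF f) p.1).
      case: P => [P|[P|P]]; [left|right;left|right;right] => -[x y] [hx hy].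
      * exact: (proj1 (Rsubn _ _) (P _ _ hx hy)).
      * by have := P _ _ hx hy; rewrite /= => ->; rewrite subrr.
      * exact: (proj1 (Rsub _ _) (P _ _ hx hy)).
    apply: sc_ext (sc_scale S1 hl) _ => -[x y] _; by rewrite hF_eq.
- move=> [d' kd] hd e /InC [V [k [hV [hk [-> _]]]]].
  have hd' : In d' (map fst Ds) by apply/In_map; exists (d', kd).
  case: (hds' _ hd' V hV) => [sub|dis]; last first.
    by right=> -[x y] [hx _] [hx' _]; apply: dis hx hx'.
  have hsub : forall f, In f (dsm kd) -> In f H.
    move=> f hf; apply/List.in_app_iff; right; apply/List.in_flat_map; by exists (d', kd).
  have side1 : forall b : xR (lin n), (forall f, b = Fin f -> In f H) ->
      (forall p, cset ltR ((V, k) : cd n.+1) p -> xlt ltR (xeval b p.1) (Fin p.2)) \/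
      (forall p, cset ltR ((V, k) : cd n.+1) p -> ~ xlt ltR (xeval b p.1) (Fin p.2)).
    case=> [|f|] hb; [by left=> p _| |by right=> p _ /=].
    case: (pos (htot V hV) (hb f erefl) hk) => [P|[P|P]].
    * right => -[x y] [hx hy] /= h; exact: Rasym h (P _ _ hx hy).
    * right => -[x y] [hx hy] /=; have := P _ _ hx hy; rewrite /= => ->; exact: Rirr.
    * left => -[x y] [hx hy] /=; exact: P.
  have side2 : forall b : xR (lin n), (forall f, b = Fin f -> In f H) ->
      (forall p, cset ltR ((V, k) : cd n.+1) p -> xlt ltR (Fin p.2) (xeval b p.1)) \/
      (forall p, cset ltR ((V, k) : cd n.+1) p -> ~ xlt ltR (Fin p.2) (xeval b p.1)).
    case=> [|f|] hb; [by right=> p _ /=| |by left=> p _].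
    case: (pos (htot V hV) (hb f erefl) hk) => [P|[P|P]].
    * left => -[x y] [hx hy] /=; exact: P.
    * right => -[x y] [hx hy] /=; have := P _ _ hx hy; rewrite /= => ->; exact: Rirr.
    * right => -[x y] [hx hy] /= h; exact: Rasym h (P _ _ hx hy).
  case: kd hd hsub => [f|lo hi] hd hsub.
  + have hfH : In f H by apply: hsub; left.
    case: (pos (htot V hV) hfH hk) => [P|[P|P]].
    * right => -[x y] [hx hy] [_ /= ee]; have := P _ _ hx hy; rewrite ee; exact: Rirr.
    * left => -[x y] [hx hy]; split; [exact: sub | exact: P _ _ hx hy].
    * right => -[x y] [hx hy] [_ /= ee]; have := P _ _ hx hy; rewrite ee; exact: Rirr.
  + have hlo : forall f, lo = Fin f -> In f H.
      by move=> f ef; apply: hsub; rewrite ef /dsm; apply/List.in_app_iff; left; left.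
    have hhi : forall f, hi = Fin f -> In f H.
      by move=> f ef; apply: hsub; rewrite ef /dsm; apply/List.in_app_iff; right; left.
    case: (side1 lo hlo) => [A|A]; last first.
      by right=> p hp [_ [h1 _]]; apply: (A p hp h1).
    case: (side2 hi hhi) => [B|B]; last first.
      by right=> p hp [_ [_ h2]]; apply: (B p hp h2).
    left=> p hp; split; first by apply: sub; case: hp.
    by split; [apply: A | apply: B].
Qed.


Lemma main_sec n (Y : pt n -> Prop) (D : list (cd n)) : is_ldec_of ltR Y D ->
  exists C : list (cd n), is_special ltR Y C /\ refines ltR C D.
Proof.
case=> FD [hFD [hFY hDin]].
have [C [hg [_ href]]] := CD (nil : list (lin n)) FD.
have [hcl [hcov hne]] := good_basic hg.
have hcovD := ldec_cover hFD.
have hCY : forall c, In c C -> (forall x, cset ltR c x -> Y x) \/ (forall x, cset ltR c x -> ~ Y x).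
  move=> c hc; have [p hp] := hne c hc.
  have [d [hd hpd]] := hcovD p.
  case: (href d hd c hc) => [sub|dis]; last by case: (dis p hp hpd).
  case: (hFY d hd) => [dy|dn]; [left|right] => x hx; [apply: dy | apply: dn]; exact: sub.
exists (cfilt (fun c => forall x, cset ltR c x -> Y x) C); split.
  by apply: (spec hg hCY) => d; apply: In_cfilt.
move=> d hd x; have [hdF hdY] := proj1 (hDin d) hd; split.
  move=> hx; have [c [hc hxc]] := hcov x.
  case: (href d hdF c hc) => [sub|dis]; last by case: (dis x hxc hx).
  exists c; split; last by split.
  apply/In_cfilt; split=> // z hz; apply: hdY; exact: sub.
by case=> c [_ [hxc sub]]; apply: sub.
Qed.

End Main.

Unset Implicit Arguments.
Theorem mainTheorem6 (L : unitRingType) (ltL : L -> L -> Prop)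
  (R : lmodType L) (ltR : R -> R -> Prop) :
  ordered_division_ring ltL ->
  ordered_vector_space ltL ltR ->
  forall (n : nat) (Y : Rn R n -> Prop),
    definable ltR Y ->
    forall D : list (cdesc R n), is_ldec_of ltR Y D ->
    exists C : list (cdesc R n), is_special ltR Y C /\ refines ltR C D.
Proof.
move=> hL hR n Y _ D hD; exact: (main_sec hL hR hD).
Qed.
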